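(* In the variety of nonempty sets, a nonempty set $G$ is geometrically stable if and only if $|G|=1$.
   Context: Regard nonempty sets as left $S$-acts over the trivial monoid $S=\{1\}$: the free object on a nonempty finite set $X$ is $X$, homomorphisms are arbitrary maps, congruences are equivalence relations. For a set $G$ and a set $A$ of maps $X\to G$, let $A'=\bigcap_{\mu\in A}\ker\mu$ (empty intersection $=X\times X$), where $\ker\mu=\{(x,y):\mu(x)=\mu(y)\}$; for a relation $T\subseteq X\times X$ let $T'_G=\{\mu:X\to G: T\subseteq\ker\mu\}$; and $A''=(A')'_G$. A set $A$ of maps $X\to G$ is an algebraic variety if $A=T'_G$ for some relation $T$ on $X$. $G$ is geometrically stable iff for every nonempty finite set $X$ and all algebraic varieties $A,B$ of maps $X\to G$, one has $(A\cup B)''=A\cup B$. *)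

(* Defs.v *)
From mathcomp Require Import all_boot.
Set Implicit Arguments. Unset Strict Implicit. Unset Printing Implicit Defensive.

(* Nonempty sets as acts over the trivial monoid: homomorphisms X -> G are
   arbitrary maps, congruences are equivalence relations. *)

Section Galois.
Variables (X : Type) (G : Type).

Definition kerm (mu : X -> G) : X -> X -> Prop := fun x y => mu x = mu y.

Definition primeA (A : (X -> G) -> Prop) : X -> X -> Prop :=
  fun x y => forall mu, A mu -> kerm mu x y.

Definition primeT (T : X -> X -> Prop) : (X -> G) -> Prop :=
  fun mu => forall x y, T x y -> kerm mu x y.

Definition dprime (A : (X -> G) -> Prop) : (X -> G) -> Prop := primeT (primeA A).

Definition seteq (A B : (X -> G) -> Prop) : Prop := forall mu, A mu <-> B mu.

Definition setU (A B : (X -> G) -> Prop) : (X -> G) -> Prop :=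
  fun mu => A mu \/ B mu.

Definition algebraic_variety (A : (X -> G) -> Prop) : Prop :=
  exists T : X -> X -> Prop, seteq A (primeT T).

End Galois.

Definition geometrically_stable (G : Type) : Prop :=
  forall (X : finType), 0 < #|X| ->
  forall A B : (X -> G) -> Prop,
    algebraic_variety A -> algebraic_variety B ->
    seteq (dprime (setU A B)) (setU A B).

(* Main.v *)
Require Import Defs.
From mathcomp Require Import all_boot.
From Stdlib Require Import Classical.

Theorem proposition2p4 (G : Type) (g0 : G) :
  geometrically_stable G <-> exists g : G, forall h : G, h = g.
Proof.
split.
- move=> GS; exists g0 => h.
  apply: NNPP => hne.
  pose T1 := fun x y : 'I_3 => val x = 0 /\ val y = 1.
  pose T2 := fun x y : 'I_3 => val x = 1 /\ val y = 2.
  have hA : algebraic_variety (primeT (G:=G) T1) by exists T1.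
  have hB : algebraic_variety (primeT (G:=G) T2) by exists T2.
  have := GS (ordinal 3) ltac:(by rewrite card_ord) _ _ hA hB.
  move=> /(_ (fun x : 'I_3 => if val x == 1 then h else g0)) [H _].
  have : Defs.setU (primeT (G:=G) T1) (primeT (G:=G) T2)
           (fun x : 'I_3 => if val x == 1 then h else g0).
    apply: H => x y P.
    have e1 := P (fun x : 'I_3 => if val x == 2 then h else g0).
    have e2 := P (fun x : 'I_3 => if val x == 0 then g0 else h).
    have e1' : (if val x == 2 then h else g0) = (if val y == 2 then h else g0).
      apply: e1; left => a1 b1 [Ha Hb]; by rewrite /kerm Ha Hb.
    have e2' : (if val x == 0 then g0 else h) = (if val y == 0 then g0 else h).
      apply: e2; right => a1 b1 [Ha Hb]; by rewrite /kerm Ha Hb.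
    rewrite /kerm.
    clear e1 e2; move: e1' e2'; clear P; case: x => [[|[|[|x]]] Hx] //=; case: y => [[|[|[|y]]] Hy] //= e1 e2;
      try done; try (by exfalso; apply: hne); try (by exfalso; apply: hne; rewrite e1 //);
      try (by exfalso; apply: hne; rewrite e2 //); try (by exfalso; apply: hne; rewrite -e1 //);
      try (by exfalso; apply: hne; rewrite -e2 //).
  case=> P.
  + apply: hne; have := P (@Ordinal 3 0 isT) (@Ordinal 3 1 isT) (conj erefl erefl).
    by rewrite /kerm /= => ->.
  + apply: hne; have := P (@Ordinal 3 1 isT) (@Ordinal 3 2 isT) (conj erefl erefl).
    by rewrite /kerm /= => ->.
- case=> g Hg X _ A B [T1 HA] _ mu; split.
  + move=> _; left; apply/HA => x y _; rewrite /kerm (Hg (mu x)) (Hg (mu y)) //.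
  + move=> U x y P; exact: P.
Qed.
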